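(* Let $N=(V,E,\tau,\{u_{ij}\})$ be a temporal network with uniform static edge length $\tau$ and piecewise constant capacities, $T$ a time horizon, and $\phi$ a cut function of a minimum $(s,0)$-$(d,T)$ cut of $\textsc{TEN}(N,T)$. Let $X_\phi=\{i\in V:\phi(i)\in\{0,T+1\}\}$ and let $C\subseteq V\setminus X_\phi$ satisfy $\phi(i)\notin F(\phi,C,i)$ for all $i\in C$. Then $\mathrm{cost}(\phi_C^+)=\mathrm{cost}(\phi_C^-)=\mathrm{cost}(\phi)$.
   Context: $\textsc{TEN}(N,T)$ is the steady-state network on $V\times[0,T]$ with an edge $(i,t)\to(j,t+\tau)$ of capacity $u_{ij}(t)$ whenever $ij\in E$ and $u_{ij}(t)\ne0$, and an infinite-capacity edge $(i,t)\to(i,t+1)$ for $t\in[0,T-1]$; source $(s,0)$, sink $(d,T)$. A cut function is $\phi:V\to[0,T+1]$ with $\phi(s)=0$, $\phi(d)=T+1$, representing the cut with source side $\{(i,t):t\ge\phi(i)\}$; $\mathrm{cost}(\phi)$ is the total capacity of edges from source side to sink side. $\mathcal T=\{t:\exists ij\in E,\ u_{ij}(t)\ne u_{ij}(t-1)\}\cup\{0,T,T+1\}$. For $C\subseteq V\setminus X_\phi$: $\phi_C^+(i)=\phi(i)+1$ for $i\in C$ and $\phi_C^+(i)=\phi(i)$ otherwise; $\phi_C^-(i)=\phi(i)-1$ for $i\in C$ and $\phi_C^-(i)=\phi(i)$ otherwise. For $i\in C$, the forbidden set $F(\phi,C,i)$ is the union of $\mathcal T\cup\{\theta+\tau:\theta\in\mathcal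 T\}$, $\{\phi(j)-\tau,\phi(j):ij\in E,\ j\in V\setminus C\}$, and $\{\phi(j)+\tau,\phi(j):ji\in E,\ j\in V\setminus C\}$. *)

(* Defs.v *)
From mathcomp Require Import all_boot all_order all_algebra.
Set Implicit Arguments. Unset Strict Implicit. Unset Printing Implicit Defensive.
Import Order.TTheory GRing.Theory Num.Theory.
Local Open Scope ring_scope.

(* Temporal network N = (V, E, tau, u): V finite vertex type, E : rel V the
   (directed) edge relation, tau the uniform static edge length, and
   u i j t the capacity of edge ij at (integer) time t. *)

(* A "vertex set" of TEN(N,T) is described by its indicator S : V -> nat -> bool
   (only the times t in [0,T] are relevant). *)

(* Total capacity of the finite-capacity edges (i,t) -> (j,t+tau) of TEN(N,T)
   going from S to its complement.  Edges with u i j t = 0 contribute 0. *)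
Definition ten_cost (R : realDomainType) (V : finType) (E : rel V) (tau T : nat)
  (u : V -> V -> nat -> R) (S : V -> nat -> bool) : R :=
  \sum_(i : V) \sum_(j : V | E i j)
     \sum_(t < T.+1 | [&& (t + tau <= T)%N, S i t & ~~ S j (t + tau)%N]) u i j t.

(* No infinite-capacity holdover edge (i,t) -> (i,t+1), t in [0,T-1],
   leaves S, i.e. the cut S has finite capacity. *)
Definition holdover_closed (V : finType) (T : nat) (S : V -> nat -> bool) : Prop :=
  forall (i : V) (t : nat), (t < T)%N -> S i t -> S i t.+1.

Definition is_cut_fun (V : finType) (s d : V) (T : nat) (phi : V -> nat) : Prop :=
  [/\ phi s = 0%N, phi d = T.+1 & forall i, (phi i <= T.+1)%N].

(* Source side of the cut represented by phi: {(i,t) : t >= phi i}. *)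
Definition cut_set (V : finType) (phi : V -> nat) : V -> nat -> bool :=
  fun i t => (phi i <= t)%N.

Definition cost (R : realDomainType) (V : finType) (E : rel V) (tau T : nat)
  (u : V -> V -> nat -> R) (phi : V -> nat) : R :=
  ten_cost E tau T u (cut_set phi).

(* phi is the cut function of a minimum (s,0)-(d,T) cut of TEN(N,T):
   its cost is at most the capacity of every (s,0)-(d,T) cut; cuts crossed
   by a holdover edge have infinite capacity, so only finite ones matter. *)
Definition is_min_cut_fun (R : realDomainType) (V : finType) (E : rel V)
  (tau T : nat) (u : V -> V -> nat -> R) (s d : V) (phi : V -> nat) : Prop :=
  is_cut_fun s d T phi /\
  forall S : V -> nat -> bool, S s 0%N -> ~~ S d T -> holdover_closed T S ->
    cost E tau T u phi <= ten_cost E tau T u S.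

Definition in_X (V : finType) (T : nat) (phi : V -> nat) (i : V) : bool :=
  (phi i == 0%N) || (phi i == T.+1).

Definition in_breaks (R : realDomainType) (V : finType) (E : rel V) (T : nat)
  (u : V -> V -> nat -> R) (t : nat) : Prop :=
  (exists i j, E i j /\ (0 < t)%N /\ u i j t != u i j t.-1)
  \/ t = 0%N \/ t = T \/ t = T.+1.

(* The forbidden set F(phi, C, i); "x = phi j - tau" is written
   "x + tau = phi j" (times are natural numbers). *)
Definition in_forbidden (R : realDomainType) (V : finType) (E : rel V)
  (tau T : nat) (u : V -> V -> nat -> R) (phi : V -> nat) (C : {set V})
  (i : V) (x : nat) : Prop :=
  (exists theta, in_breaks E T u theta /\ (x = theta \/ x = (theta + tau)%N))
  \/ (exists j, E i j /\ j \notin C /\ ((x + tau)%N = phi j \/ x = phi j))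
  \/ (exists j, E j i /\ j \notin C /\ (x = (phi j + tau)%N \/ x = phi j)).

Definition phi_plus (V : finType) (phi : V -> nat) (C : {set V}) : V -> nat :=
  fun i => if i \in C then (phi i).+1 else phi i.

Definition phi_minus (V : finType) (phi : V -> nat) (C : {set V}) : V -> nat :=
  fun i => if i \in C then (phi i).-1 else phi i.

(* Main.v *)
Require Import Defs.
From mathcomp Require Import all_boot all_order all_algebra.
From mathcomp Require Import zify ring lra.
Import Order.TTheory GRing.Theory Num.Theory.
Local Open Scope ring_scope.

Section Aux.
Variable R : realDomainType.

Definition Fs (u : nat -> R) (x : nat) : R := \sum_(t < x) u t.
Definition W (u : nat -> R) (tau a c : nat) : R :=
  Fs u (maxn a (c - tau)) - Fs u a.

Lemma FsS u x : Fs u x.+1 = Fs u x + u x.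
Proof. by rewrite /Fs big_ord_recr. Qed.

Lemma window (u : nat -> R) (T a b : nat) : (a <= b)%N -> (b <= T.+1)%N ->
  \sum_(t < T.+1 | (a <= t)%N && (t < b)%N) u t = Fs u b - Fs u a.
Proof.
move=> hab hb.
have ha : (a <= T.+1)%N by apply: leq_trans hab hb.
rewrite /Fs (big_ord_widen _ _ hb) (big_ord_widen _ _ ha).
have -> : \sum_(i < T.+1 | (i < b)%N) u i = \sum_(i < T.+1 | (i < a)%N) u i
    + \sum_(t < T.+1 | (a <= t)%N && (t < b)%N) u t.
  rewrite (bigID (fun t : 'I_T.+1 => (t < a)%N)) /=; congr (_ + _); apply: eq_bigl => t.
    apply/idP/idP => [/andP[] //|h]; apply/andP; split => //; lia.
  by rewrite -leqNgt andbC.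
by rewrite addrC addKr.
Qed.

Lemma edge_term (u : nat -> R) (tau T a c : nat) : (a <= T.+1)%N -> (c <= T.+1)%N ->
  \sum_(t < T.+1 | [&& (t + tau <= T)%N, (a <= t)%N & ~~ (c <= t + tau)%N]) u t
  = W u tau a c.
Proof.
move=> ha hc; rewrite /W -(@window u T); last by rewrite geq_max ha; lia.
  apply: eq_bigl => t; apply/idP/idP.
    move/and3P => [h1 h2 h3]; apply/andP; split => //; lia.
  move/andP => [h1 h2]; apply/and3P; split => //; lia.
exact: leq_maxl.
Qed.

Lemma B1 (u : nat -> R) tau a c : (0 < a)%N -> (a + tau != c)%N -> u a = u a.-1 ->
  W u tau a.+1 c + W u tau a.-1 c = W u tau a c + W u tau a c.
Proof.
case: a => [//|a] _ /eqP hne hu /=; rewrite /W.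
case: (ltnP (a.+1 + tau) c) => h.
  have -> : (maxn a.+2 (c - tau) = c - tau)%N by lia.
  have -> : (maxn a (c - tau) = c - tau)%N by lia.
  have -> : (maxn a.+1 (c - tau) = c - tau)%N by lia.
  rewrite !FsS /=; rewrite /= in hu; rewrite hu; lra.
have -> : (maxn a.+2 (c - tau) = a.+2)%N by lia.
have -> : (maxn a (c - tau) = a)%N by lia.
have -> : (maxn a.+1 (c - tau) = a.+1)%N by lia.
by rewrite !subrr addr0.
Qed.

Lemma B2 (u : nat -> R) tau a c : (0 < c)%N -> (a + tau != c)%N ->
  (forall x, (0 < x)%N -> (x + tau)%N = c -> u x = u x.-1) ->
  W u tau a c.+1 + W u tau a c.-1 = W u tau a c + W u tau a c.
Proof.
move=> hc /eqP hne hu; rewrite /W.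
case: (ltnP (a + tau) c) => h.
  have [m hm] : exists m, c = (m.+1 + tau)%N by exists (c - tau).-1; lia.
  have -> : (maxn a (c.+1 - tau) = m.+2)%N by lia.
  have -> : (maxn a (c.-1 - tau) = m)%N by lia.
  have -> : (maxn a (c - tau) = m.+1)%N by lia.
  have hum : u m.+1 = u m by apply: hu => //; rewrite hm.
  rewrite !FsS hum; lra.
have -> : (maxn a (c.+1 - tau) = a)%N by lia.
have -> : (maxn a (c.-1 - tau) = a)%N by lia.
have -> : (maxn a (c - tau) = a)%N by lia.
by rewrite !subrr addr0.
Qed.

Lemma B3 (u : nat -> R) tau a c : (0 < a)%N -> (0 < c)%N -> u a = u a.-1 ->
  (forall x, (0 < x)%N -> (x + tau)%N = c -> u x = u x.-1) ->
  W u tau a.+1 c.+1 + W u tau a.-1 c.-1 = W u tau a c + W u tau a c.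
Proof.
case: a => [//|a] hc _ hua hu; rewrite /W /=.
case: (ltnP (a.+1 + tau) c) => h.
  have [m hm] : exists m, c = (m.+1 + tau)%N by exists (c - tau).-1; lia.
  have -> : (maxn a.+2 (c.+1 - tau) = m.+2)%N by lia.
  have -> : (maxn a (c.-1 - tau) = m)%N by lia.
  have -> : (maxn a.+1 (c - tau) = m.+1)%N by lia.
  have hum : u m.+1 = u m by apply: hu => //; rewrite hm.
  rewrite !FsS hum /=; rewrite /= in hua; rewrite hua; lra.
have -> : (maxn a.+2 (c.+1 - tau) = a.+2)%N by lia.
have -> : (maxn a (c.-1 - tau) = a)%N by lia.
have -> : (maxn a.+1 (c - tau) = a.+1)%N by lia.
by rewrite !subrr addr0.
Qed.

Lemma cost_W (V : finType) (E : rel V) tau T (u : V -> V -> nat -> R) (psi : V -> nat) :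
  (forall i, (psi i <= T.+1)%N) ->
  cost E tau T u psi = \sum_(i : V) \sum_(j : V | E i j) W (u i j) tau (psi i) (psi j).
Proof.
move=> hb; rewrite /cost /ten_cost /cut_set.
apply: eq_bigr => i _; apply: eq_bigr => j _; exact: edge_term.
Qed.

End Aux.

Theorem mainTheorem3 (R : realDomainType) (V : finType) (E : rel V)
  (tau T : nat) (u : V -> V -> nat -> R) (s d : V) (phi : V -> nat)
  (C : {set V}) :
  (0 < tau)%N ->
  (forall i j t, 0 <= u i j t) ->
  is_min_cut_fun E tau T u s d phi ->
  (forall i, i \in C -> ~~ in_X T phi i) ->
  (forall i, i \in C -> ~ in_forbidden E tau T u phi C i (phi i)) ->
  cost E tau T u (phi_plus phi C) = cost E tau T u phi /\
  cost E tau T u (phi_minus phi C) = cost E tau T u phi.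
Proof.
move=> htau _ [[Hs Hd Hle] Hmin] HX Hf.
have F1 : forall i k l, i \in C -> E k l -> (0 < phi i)%N ->
    u k l (phi i) = u k l (phi i).-1.
  move=> i k l Hi Ekl Hp; apply/eqP; apply/negPn; apply/negP => Hne.
  apply: (Hf i Hi); left; exists (phi i); split; last by left.
  by left; exists k, l.
have F2 : forall i k l x, i \in C -> E k l -> (0 < x)%N -> (x + tau)%N = phi i ->
    u k l x = u k l x.-1.
  move=> i k l x Hi Ekl Hp Hx; apply/eqP; apply/negPn; apply/negP => Hne.
  apply: (Hf i Hi); left; exists x; split; last by right.
  by left; exists k, l.
have F3 : forall i j, i \in C -> E i j -> j \notin C -> (phi i + tau != phi j)%N.
  move=> i j Hi Eij Hj; apply/eqP => H; apply: (Hf i Hi); right; left.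
  by exists j; split; [|split; [|left]].
have F4 : forall i j, i \in C -> E j i -> j \notin C -> (phi j + tau != phi i)%N.
  move=> i j Hi Eji Hj; apply/eqP => H; apply: (Hf i Hi); right; right.
  by exists j; split; [|split; [|left]].
have Hpos : forall i, i \in C -> (0 < phi i)%N.
  move=> i /HX; rewrite /in_X negb_or => /andP[h _]; by rewrite lt0n.
have HleT : forall i, i \in C -> (phi i <= T)%N.
  move=> i /HX; rewrite /in_X negb_or => /andP[_ h]; have := Hle i; lia.
have sC : s \notin C by apply/negP => /HX; rewrite /in_X Hs.
have dC : d \notin C by apply/negP => /HX; rewrite /in_X Hd eqxx orbT.
have Bp : forall i, (phi_plus phi C i <= T.+1)%N.
  move=> i; rewrite /phi_plus; case: ifP => h; last exact: Hle.
  by have := HleT i h.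
have Bm : forall i, (phi_minus phi C i <= T.+1)%N.
  move=> i; rewrite /phi_minus; case: ifP => h; last exact: Hle.
  by have := Hle i; lia.
have hol : forall psi : V -> nat, holdover_closed T (cut_set psi).
  by move=> psi i t _ H; apply: leq_trans H (leqnSn t).
have Gp : cost E tau T u phi <= cost E tau T u (phi_plus phi C).
  apply: Hmin (hol _); rewrite /cut_set /phi_plus ?(negbTE sC) ?(negbTE dC) ?Hs ?Hd //.
  by rewrite -ltnNge.
have Gm : cost E tau T u phi <= cost E tau T u (phi_minus phi C).
  apply: Hmin (hol _); rewrite /cut_set /phi_minus ?(negbTE sC) ?(negbTE dC) ?Hs ?Hd //.
  by rewrite -ltnNge.
have Sum : cost E tau T u (phi_plus phi C) + cost E tau T u (phi_minus phi C)
    = cost E tau T u phi + cost E tau T u phi.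
  rewrite !cost_W // -!big_split /=; apply: eq_bigr => i _.
  rewrite -!big_split /=; apply: eq_bigr => j Eij.
  rewrite /phi_plus /phi_minus.
  case Hi: (i \in C); case Hj: (j \in C).
  - apply: B3; [exact: Hpos | exact: Hpos | exact: (F1 i i j Hi Eij (Hpos i Hi)) | ].
    by move=> x hx hxe; apply: (F2 j i j x Hj Eij hx hxe).
  - apply: B1; [exact: Hpos | apply: (F3 i j Hi Eij); by rewrite Hj | exact: (F1 i i j Hi Eij (Hpos i Hi))].
  - apply: B2; [exact: Hpos | apply: (F4 j i Hj Eij); by rewrite Hi | ].
    by move=> x hx hxe; apply: (F2 j i j x Hj Eij hx hxe).
  - reflexivity.
split; lra.
Qed.
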